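(* Let $\mathbb{X}\subseteq\mathbb{R}^{n_x}$, $\mathbb{U}\subseteq\mathbb{R}^{n_u}$ with $0<\mu_L(\mathbb{U})<\infty$ ($\mu_L$ = Lebesgue measure), let $T>0$ be an integer, let $p(x_0)$ be an initial density on $\mathbb{X}$ and $p(x_{t+1}\mid x_t,u_t)$, $t\in\{0,\dots,T-1\}$, transition densities, and let $c_t:\mathbb{X}\times\mathbb{U}\to\mathbb{R}_{\ge 0}$ ($t\in\{0,\dots,T-1\}$), $c_T:\mathbb{X}\to\mathbb{R}_{\ge 0}$. Let $p(\tau\mid\mathcal{O}_{0:T}=1)$ be the optimal trajectory density of control as inference, i.e. the density on trajectories $\tau=(x_{0:T},u_{0:T-1})$ satisfying $$p(\tau\mid\mathcal{O}_{0:T}=1)\propto p(x_0)\prod_{t=0}^{T-1}p(x_{t+1}\mid x_t,u_t)\,\exp\Big(-c_T(x_T)-\sum_{t=0}^{T-1}c_t(x_t,u_t)\Big).$$ For policies $\pi=\{\pi_t\}_{t=0}^{T-1}$, where each $\pi_t(\cdot\mid x)$ is a probability density on $\mathbb{U}$ for every $x\in\mathbb{X}$, let $p^\pi(\tau)=p(x_0)\prod_{t=0}^{T-1}p(x_{t+1}\mid x_t,u_t)\pi_t(u_t\mid x_t)$. Then for any $\eta>-1$, $\eta\neq 0$, minimizing the R\'enyi divergence $D_{1+\eta}(p^\pi\,\|\,p(\cdot\mid\mathcal{O}_{0:T}=1))$ with respect to $p^\pi$ of this form (i.e. with respect to $\{\pi_t\}$) is equivalent to the problem $$\underset{\{\pi_t\}_{t=0}^{T-1}}{\mathrm{minimize}}\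 \ \frac{1}{\eta}\log\mathbb{E}_{p^\pi(\tau)}\Big[\exp\Big(\eta c_T(x_T)+\eta\sum_{t=0}^{T-1}\big(c_t(x_t,u_t)+\log\pi_t(u_t\mid x_t)\big)\Big)\Big].$$
   Context: For densities $p_1,p_2$ and $\alpha>0$, $\alpha\ne1$, the R\'enyi divergence is $D_\alpha(p_1\|p_2)=\frac{1}{\alpha-1}\log\int_{\{p_1p_2>0\}}p_1(u)^\alpha p_2(u)^{1-\alpha}\,du$. In control as inference, binary optimality variables $\mathcal{O}_t$ satisfy $p(\mathcal{O}_t=1\mid x_t,u_t)=\exp(-c_t(x_t,u_t))$, $p(\mathcal{O}_T=1\mid x_T)=\exp(-c_T(x_T))$, and the control prior is uniform, $p(u_t)=1/\mu_L(\mathbb{U})$. ''Equivalent'' means the two minimization problems over $\{\pi_t\}$ have the same minimizers. *)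

(* Defs.v *)
From HB Require Import structures.
From mathcomp Require Import all_boot all_order all_algebra.
From mathcomp Require Import all_classical all_reals all_analysis.
Set Implicit Arguments. Unset Strict Implicit. Unset Printing Implicit Defensive.
Import Order.TTheory GRing.Theory Num.Theory.
Local Open Scope classical_set_scope.
Local Open Scope ring_scope.

Section Defs.
Context {R : realType}.

(* Lebesgue integral on R^n (points are n.-tuples) of a nonnegative
   extended-real function, as the iterated one-dimensional Lebesgue
   integral (equal to the integral w.r.t. the n-dim Lebesgue measure by
   Tonelli for nonnegative integrands). *)
Fixpoint lebint (n : nat) : (n.-tuple R -> \bar R) -> \bar R :=
  match n return (n.-tuple R -> \bar R) -> \bar R with
  | 0 => fun f => f [tuple]
  | n'.+1 => fun f =>
      (\int[@lebesgue_measure R]_x lebint (fun t => f (cons_tuple x t)))%E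
  end.

Definition lebint_on (n : nat) (A : set (n.-tuple R)) (f : n.-tuple R -> \bar R)
  : \bar R := lebint (fun v => ((\1_A v)%:E * f v)%E).

Definition lebmeasure (n : nat) (A : set (n.-tuple R)) : \bar R :=
  lebint_on A (fun _ => 1%E).

(* Integral over trajectories tau = (x_{0:t}, u_{0:t-1}): the trajectory
   (xs, us) has xs = [x_0; ...; x_t] and us = [u_0; ...; u_{t-1}];
   intX / intU integrate over the state / control space. *)
Fixpoint traj_int {S Cn : Type} (intX : (S -> \bar R) -> \bar R)
  (intU : (Cn -> \bar R) -> \bar R) (t : nat)
  (F : seq S * seq Cn -> \bar R) : \bar R :=
  match t with
  | 0 => intX (fun x => F ([:: x], [::]))
  | t'.+1 => traj_int intX intU t'
      (fun tau => intU (fun u => intX (fun x => F (rcons tau.1 x, rcons tau.2 u))))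
  end.

Definition renyi {A : Type} (I : (A -> \bar R) -> \bar R) (alpha : R)
  (p1 p2 : A -> R) : \bar R :=
  (((alpha - 1)^-1)%:E *
   lne (I (fun a => if (0 < p1 a * p2 a)%R
                    then (powR (p1 a) alpha * powR (p2 a) (1 - alpha))%:E
                    else 0%E)))%E.

Definition at_ {n : nat} (s : seq (n.-tuple R)) (t : nat) : n.-tuple R :=
  nth (nseq_tuple n 0) s t.

Definition trajectory (nx nu : nat) := (seq (nx.-tuple R) * seq (nu.-tuple R))%type.

Definition policy (nx nu : nat) := nat -> nx.-tuple R -> nu.-tuple R -> R.

Definition trajI (nx nu : nat) (X : set (nx.-tuple R)) (U : set (nu.-tuple R))
  (T : nat) : (trajectory nx nu -> \bar R) -> \bar R :=
  traj_int (lebint_on X) (lebint_on U) T.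

Definition traj_density (nx nu T : nat) (p0 : nx.-tuple R -> R)
  (ptr : nat -> nx.-tuple R -> nu.-tuple R -> nx.-tuple R -> R)
  (pi : policy nx nu) (tau : trajectory nx nu) : R :=
  p0 (at_ tau.1 0) *
  \prod_(t < T) (ptr t (at_ tau.1 t) (at_ tau.2 t) (at_ tau.1 t.+1) *
                 pi t (at_ tau.1 t) (at_ tau.2 t)).

Definition traj_cost (nx nu T : nat) (c : nat -> nx.-tuple R -> nu.-tuple R -> R)
  (cT : nx.-tuple R -> R) (tau : trajectory nx nu) : R :=
  cT (at_ tau.1 T) + \sum_(t < T) c t (at_ tau.1 t) (at_ tau.2 t).

Definition opt_unnorm (nx nu T : nat) (p0 : nx.-tuple R -> R)
  (ptr : nat -> nx.-tuple R -> nu.-tuple R -> nx.-tuple R -> R)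
  (c : nat -> nx.-tuple R -> nu.-tuple R -> R) (cT : nx.-tuple R -> R)
  (tau : trajectory nx nu) : R :=
  p0 (at_ tau.1 0) *
  (\prod_(t < T) ptr t (at_ tau.1 t) (at_ tau.2 t) (at_ tau.1 t.+1)) *
  expR (- traj_cost T c cT tau).

Definition opt_Z (nx nu : nat) (X : set (nx.-tuple R)) (U : set (nu.-tuple R))
  (T : nat) p0 ptr c cT : \bar R :=
  trajI X U T (fun tau => (@opt_unnorm nx nu T p0 ptr c cT tau)%:E).

Definition opt_density (nx nu : nat) (X : set (nx.-tuple R)) (U : set (nu.-tuple R))
  (T : nat) p0 ptr c cT (tau : trajectory nx nu) : R :=
  @opt_unnorm nx nu T p0 ptr c cT tau / fine (opt_Z X U T p0 ptr c cT).

Definition admissible (nx nu : nat) (X : set (nx.-tuple R)) (U : set (nu.-tuple R))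
  (T : nat) (pi : policy nx nu) : Prop :=
  forall t x, (t < T)%N -> X x ->
    (forall u, U u -> 0 <= pi t x u) /\
    lebint_on U (fun u => (pi t x u)%:E) = 1%E.

Definition risk_objective (nx nu : nat) (X : set (nx.-tuple R)) (U : set (nu.-tuple R))
  (T : nat) p0 ptr (c : nat -> nx.-tuple R -> nu.-tuple R -> R) cT (eta : R)
  (pi : policy nx nu) : \bar R :=
  ((eta^-1)%:E *
   lne (trajI X U T (fun tau =>
     (traj_density T p0 ptr pi tau *
      expR (eta * cT (at_ tau.1 T) +
            eta * \sum_(t < T) (c t (at_ tau.1 t) (at_ tau.2 t) +
                                ln (pi t (at_ tau.1 t) (at_ tau.2 t)))))%:E)))%E.

Definition is_minimizer {A : Type} (P : A -> Prop) (F : A -> \bar R) (a : A) : Prop :=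
  P a /\ forall b, P b -> (F a <= F b)%E.

End Defs.

(* Main.v *)
Require Import Defs.
From HB Require Import structures.
From mathcomp Require Import all_boot all_order all_algebra.
From mathcomp Require Import all_classical all_reals all_analysis.
From mathcomp Require Import ring lra.
Import Order.TTheory GRing.Theory Num.Theory.
Local Open Scope classical_set_scope.
Local Open Scope ring_scope.
Local Open Scope ereal_scope.

Local Close Scope ereal_scope.
Lemma key_real (R : realType) (P Q cst Zr eta Lq : R) : 0 <= P -> 0 <= Q -> 0 < Zr ->
  (0 < Q -> ln Q = Lq) ->
  (if 0 < P * Q * (P * expR (- cst) / Zr)
   then powR (P * Q) (1 + eta) * powR (P * expR (- cst) / Zr) (1 - (1 + eta)) else 0)
  = powR Zr eta * (P * Q * expR (eta * cst + eta * Lq)).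
Proof.
move=> P0 Q0 Z0 hL.
have E0 : 0 < expR (- cst) by exact: expR_gt0.
case: ifPn => h.
- have PQ : P * Q != 0 by apply/eqP => e; move: h; rewrite e mul0r ltxx.
  move: PQ; rewrite mulf_eq0 negb_or => /andP[nP nQ].
  have Pp : 0 < P by rewrite lt_neqAle eq_sym nP.
  have Qp : 0 < Q by rewrite lt_neqAle eq_sym nQ.
  have PE : 0 < P * expR (- cst) / Zr by rewrite divr_gt0 // mulr_gt0.
  rewrite /powR !gt_eqF // ?mulr_gt0 //.
  rewrite ln_div ?posrE ?mulr_gt0 // !lnM ?posrE // expRK -(hL Qp).
  rewrite (_ : P * Q = expR (ln P + ln Q)); last by rewrite expRD !lnK.
  rewrite -!expRD; congr (expR _); ring.
- have PQ : P * Q = 0.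
    apply/eqP; rewrite eq_le mulr_ge0 // andbT leNgt; move: h; apply: contra => h.
    rewrite mulr_gt0 // divr_gt0 // mulr_gt0 //.
    by rewrite lt_neqAle P0 andbT eq_sym; apply/eqP => e; move: h; rewrite e mul0r ltxx.
  by rewrite PQ mul0r mulr0.
Qed.

Local Open Scope ereal_scope.

Section S.
Context d (T : measurableType d) (R : realType) (mu : {measure set T -> \bar R}).
Import HBNNSimple.

Lemma nn_scale (g : T -> \bar R) (k : R) : (0 < k)%R ->
  ereal_sup [set sintegral mu h | h in [set h : {nnsfun T >-> R} | forall x, (h x)%:E <= k%:E * g x]]
  = k%:E * ereal_sup [set sintegral mu h | h in [set h : {nnsfun T >-> R} | forall x, (h x)%:E <= g x]].
Proof.
move=> k0; rewrite -ereal_sup_pZl //; congr ereal_sup.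
apply/seteqP; split => y /=.
- case=> h hk <-.
  have ki : (0 <= k^-1)%R by rewrite invr_ge0 ltW.
  exists (sintegral mu (scale_nnsfun h ki)).
    exists (scale_nnsfun h ki) => // x /=.
    rewrite EFinM; idtac.
    have := hk x; rewrite -(@lee_pmul2l _ (k^-1)%:E) ?lte_fin ?invr_gt0 //.
    by rewrite muleA (_ : (k^-1)%:E * k%:E = 1) ?mul1e // -EFinM mulVf // gt_eqF.
  rewrite -(sintegralrM mu k); apply: eq_sintegral => x /=.
  by rewrite mulrA mulfV ?gt_eqF // mul1r.
- case=> _ [h hg <-] <-.
  exists (scale_nnsfun h (ltW k0)) => [x /=|].
    by rewrite EFinM lee_pmul2l // ?lte_fin.
  by rewrite -(sintegralrM mu k).
Qed.

Lemma ge0_intZ (D : set T) (g : T -> \bar R) (k : R) : (0 < k)%R ->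
  (forall x, 0 <= g x) ->
  \int[mu]_(x in D) (k%:E * g x) = k%:E * \int[mu]_(x in D) g x.
Proof.
move=> k0 g0.
rewrite ge0_integralE; last by move=> x _; rewrite mule_ge0 // lee_fin ltW.
rewrite ge0_integralE; last by move=> x _; exact: g0.
rewrite erestrict_scale; exact: nn_scale.
Qed.

Lemma intZ (D : set T) (f : T -> \bar R) (k : R) : (0 <= k)%R ->
  \int[mu]_(x in D) (k%:E * f x) = k%:E * \int[mu]_(x in D) f x.
Proof.
rewrite le_eqVlt => /predU1P[<-|k0].
  rewrite mul0e; under eq_integral do rewrite mul0e.
  by rewrite integral0.
rewrite integralE [in RHS]integralE ge0_funeposM ?ltW // ge0_funenegM ?ltW //.
rewrite !ge0_intZ //.
have a0 : 0 <= \int[mu]_(x in D) f^\+ x by apply: integral_ge0.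
have b0 : 0 <= \int[mu]_(x in D) f^\- x by apply: integral_ge0.
move: a0 b0.
case: (\int[mu]_(x in D) f^\+ x) => [a| |]; case: (\int[mu]_(x in D) f^\- x) => [b| |] //= _ _.
all: rewrite ?gt0_muley ?lte_fin //.
- by rewrite -EFinM -EFinB -EFinM mulrBr.
- by rewrite -EFinM addeNy gt0_muleNy ?lte_fin.
- by rewrite addeNy gt0_muleNy ?lte_fin.
Qed.
End S.

Section T.
Context {R : realType}.

Lemma lebintZ n (f : n.-tuple R -> \bar R) (k : R) : (0 <= k)%R ->
  lebint (fun v => k%:E * f v) = k%:E * lebint f.
Proof.
move=> k0; elim: n f => [|n IH] f //=.
rewrite (_ : (fun x => lebint (fun t => k%:E * f (cons_tuple x t))) =
   fun x => k%:E * lebint (fun t => f (cons_tuple x t))); first exact: intZ.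
by apply: funext => x; rewrite IH.
Qed.

Lemma lebint_onZ n (A : set (n.-tuple R)) f (k : R) : (0 <= k)%R ->
  lebint_on A (fun v => k%:E * f v) = k%:E * lebint_on A f.
Proof.
move=> k0; rewrite /lebint_on -lebintZ //; congr lebint.
by apply: funext => v; rewrite muleCA.
Qed.

Lemma lebint_on_congr n (A : set (n.-tuple R)) f g :
  (forall v, A v -> f v = g v) -> lebint_on A f = lebint_on A g.
Proof.
move=> fg; rewrite /lebint_on; congr lebint; apply: funext => v.
have [Av|nAv] := boolP (v \in A).
  by rewrite fg // -in_setE.
by rewrite indicE (negbTE nAv) !mul0e.
Qed.

Fixpoint allp {S : Type} (P : S -> Prop) (s : seq S) : Prop :=
  match s with [::] => True | x :: s => P x /\ allp P s end.

Lemma allp_rcons {S : Type} (P : S -> Prop) s x : allp P s -> P x -> allp P (rcons s x).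
Proof. by elim: s => [|y s IH] //= [? ?] ?; split => //; apply: IH. Qed.

Lemma allp_nth {S : Type} (P : S -> Prop) s d i : allp P s -> (i < size s)%N -> P (nth d s i).
Proof.
elim: s i => [|y s IH] [|i] //=; first by case.
by case=> _ As; rewrite ltnS; apply: IH.
Qed.

Definition validt {S Cn : Type} (PX : S -> Prop) (PU : Cn -> Prop) t (tau : seq S * seq Cn) :=
  [/\ allp PX tau.1, allp PU tau.2, size tau.1 = t.+1 & size tau.2 = t].

Lemma traj_int_congr {S Cn : Type} (intX : (S -> \bar R) -> \bar R)
  (intU : (Cn -> \bar R) -> \bar R) PX PU :
  (forall f g, (forall x, PX x -> f x = g x) -> intX f = intX g) ->
  (forall f g, (forall x, PU x -> f x = g x) -> intU f = intU g) ->
  forall t F G, (forall tau, validt PX PU t tau -> F tau = G tau) ->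
  traj_int intX intU t F = traj_int intX intU t G.
Proof.
move=> hX hU; elim=> [|t IH] F G FG /=.
  by apply: hX => x Px; apply: FG; split.
apply: IH => -[xs us] [/= ax au sx su].
apply: hU => u Pu; apply: hX => x Px; apply: FG; split => /=.
- exact: allp_rcons.
- exact: allp_rcons.
- by rewrite size_rcons sx.
- by rewrite size_rcons su.
Qed.

Lemma traj_intZ {S Cn : Type} (intX : (S -> \bar R) -> \bar R)
  (intU : (Cn -> \bar R) -> \bar R) :
  (forall f (k : R), (0 <= k)%R -> intX (fun x => k%:E * f x) = k%:E * intX f) ->
  (forall f (k : R), (0 <= k)%R -> intU (fun x => k%:E * f x) = k%:E * intU f) ->
  forall t F (k : R), (0 <= k)%R ->
  traj_int intX intU t (fun tau => k%:E * F tau) = k%:E * traj_int intX intU t F.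
Proof.
move=> hX hU; elim=> [|t IH] F k k0 /=; first exact: hX.
rewrite -IH //; congr traj_int; apply: funext => tau.
rewrite -hU //; congr intU; apply: funext => u.
by rewrite -hX.
Qed.

End T.

Local Close Scope ereal_scope.

Lemma ln_prod (R : realType) (n : nat) (F : nat -> R) :
  (forall i : 'I_n, 0 <= F i) -> 0 < \prod_(i < n) F i ->
  ln (\prod_(i < n) F i) = \sum_(i < n) ln (F i).
Proof.
elim: n => [|n IH] hF hP; first by rewrite !big_ord0 ln1.
rewrite big_ord_recr /= in hP *; rewrite big_ord_recr /=.
have A0 : 0 <= \prod_(i < n) F i by apply: prodr_ge0 => i _; exact: (hF (widen_ord (leqnSn n) i)).
have B0 : 0 <= F n by exact: (hF ord_max).
have Ap : 0 < \prod_(i < n) F i.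
  by rewrite lt_neqAle A0 andbT eq_sym; apply/eqP => e; move: hP; rewrite e mul0r ltxx.
have Bp : 0 < F n.
  by rewrite lt_neqAle B0 andbT eq_sym; apply/eqP => e; move: hP; rewrite e mulr0 ltxx.
rewrite lnM ?posrE // IH //.
by move=> i; exact: (hF (widen_ord (leqnSn n) i)).
Qed.

Local Open Scope ereal_scope.

Lemma lneZ (R : realType) (k : R) (x : \bar R) : (0 < k)%R ->
  lne (k%:E * x) = (ln k)%:E + lne x.
Proof.
move=> k0; case: x => [r| |].
- rewrite -EFinM /=; have [r0|r0] := leP r 0%R.
    by rewrite pmulr_rle0 // r0 addeNy.
  by rewrite ifF ?lnM ?posrE // ?EFinD //; apply/negbTE; rewrite -ltNge mulr_gt0.
- by rewrite gt0_muley ?lte_fin.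
- by rewrite gt0_muleNy ?lte_fin // addeNy.
Qed.

Lemma gen_step (R : realType) (A : Type) (I : (A -> \bar R) -> \bar R) F G (k eta : R) :
  (0 < k)%R -> I F = k%:E * I G ->
  (eta^-1)%:E * lne (I F) = (eta^-1 * ln k)%:E + (eta^-1)%:E * lne (I G).
Proof.
move=> k0 ->; rewrite lneZ // muleDr // EFinM //.
Qed.

Local Close Scope ereal_scope.

Theorem theorem1 (R : realType) (nx nu T : nat)
  (X : set (nx.-tuple R)) (U : set (nu.-tuple R))
  (p0 : nx.-tuple R -> R)
  (ptr : nat -> nx.-tuple R -> nu.-tuple R -> nx.-tuple R -> R)
  (c : nat -> nx.-tuple R -> nu.-tuple R -> R) (cT : nx.-tuple R -> R)
  (eta : R) :
  (0 < nx)%N -> (0 < nu)%N -> (0 < T)%N ->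
  (0 < lebmeasure U)%E -> (lebmeasure U < +oo)%E ->
  (forall x, X x -> 0 <= p0 x) ->
  lebint_on X (fun x => (p0 x)%:E) = 1%E ->
  (forall t x u, (t < T)%N -> X x -> U u ->
     (forall x', X x' -> 0 <= ptr t x u x') /\
     lebint_on X (fun x' => (ptr t x u x')%:E) = 1%E) ->
  (forall t x u, (t < T)%N -> X x -> U u -> 0 <= c t x u) ->
  (forall x, X x -> 0 <= cT x) ->
  (0 < opt_Z X U T p0 ptr c cT)%E -> (opt_Z X U T p0 ptr c cT < +oo)%E ->
  -1 < eta -> eta != 0 ->
  forall pi : policy nx nu,
    is_minimizer (admissible X U T)
      (fun pi' => renyi (trajI X U T) (1 + eta)
                    (traj_density T p0 ptr pi')
                    (opt_density X U T p0 ptr c cT)) pi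
    <->
    is_minimizer (admissible X U T)
      (risk_objective X U T p0 ptr c cT eta) pi.
Proof.
move=> nx0 nu0 T0 mU0 mUoo p0ge p0int ptrH cge cTge Z0 Zoo eta1 eta0 pi.
have Zr0 : (0 < fine (opt_Z X U T p0 ptr c cT))%R by apply: fine_gt0; rewrite Z0 Zoo.
pose k := powR (fine (opt_Z X U T p0 ptr c cT)) eta.
have k0 : (0 < k)%R by apply: powR_gt0.
have key : forall pi', admissible X U T pi' ->
  renyi (trajI X U T) (1 + eta) (traj_density T p0 ptr pi') (opt_density X U T p0 ptr c cT)
  = ((eta^-1 * ln k)%:E + risk_objective X U T p0 ptr c cT eta pi').
  move=> pi' adm.
  rewrite /renyi /risk_objective (_ : (1 + eta - 1)%R = eta); last by ring.
  apply: gen_step => //.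
  rewrite /trajI -(traj_intZ _ _ (fun f k' h => @lebint_onZ R nx X f k' h)
                            (fun f k' h => @lebint_onZ R nu U f k' h) _ _ _ (ltW k0)).
  apply: (traj_int_congr _ _ X U).
  - by move=> f g fg; apply: lebint_on_congr.
  - by move=> f g fg; apply: lebint_on_congr.
  move=> tau [ax au sx su] /=.
  have hx : forall i, (i <= T)%N -> X (at_ tau.1 i).
    by move=> i hi; rewrite /at_; apply: allp_nth ax _; rewrite sx ltnS.
  have hu : forall i, (i < T)%N -> U (at_ tau.2 i).
    by move=> i hi; rewrite /at_; apply: allp_nth au _; rewrite su.
  have P0 : (0 <= p0 (at_ tau.1 0) *
     \prod_(t < T) ptr t (at_ tau.1 t) (at_ tau.2 t) (at_ tau.1 t.+1))%R.
    apply: mulr_ge0; first exact: p0ge (hx 0%N isT).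
    apply: prodr_ge0 => t _.
    by apply: (ptrH t _ _ (ltn_ord t) (hx t (ltnW (ltn_ord t))) (hu t (ltn_ord t))).1;
       apply: hx; exact: ltn_ord.
  have Q0 : (0 <= \prod_(t < T) pi' t (at_ tau.1 t) (at_ tau.2 t))%R.
    apply: prodr_ge0 => t _.
    exact: (adm t _ (ltn_ord t) (hx t (ltnW (ltn_ord t)))).1 _ (hu t (ltn_ord t)).
  have Ld : (0 < \prod_(t < T) pi' t (at_ tau.1 t) (at_ tau.2 t))%R ->
     ln (\prod_(t < T) pi' t (at_ tau.1 t) (at_ tau.2 t)) =
     (\sum_(t < T) ln (pi' t (at_ tau.1 t) (at_ tau.2 t)))%R.
    apply: (@ln_prod R T (fun t => pi' t (at_ tau.1 t) (at_ tau.2 t))) => t.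
    exact: (adm t _ (ltn_ord t) (hx t (ltnW (ltn_ord t)))).1 _ (hu t (ltn_ord t)).
  have TD : traj_density T p0 ptr pi' tau =
     (p0 (at_ tau.1 0) *
     \prod_(t < T) ptr t (at_ tau.1 t) (at_ tau.2 t) (at_ tau.1 t.+1) *
     \prod_(t < T) pi' t (at_ tau.1 t) (at_ tau.2 t))%R.
    by rewrite /traj_density big_split /= mulrA.
  have EX : (eta * cT (at_ tau.1 T) + eta * \sum_(t < T) (c t (at_ tau.1 t) (at_ tau.2 t)
     + ln (pi' t (at_ tau.1 t) (at_ tau.2 t))) =
     eta * traj_cost T c cT tau + eta * \sum_(t < T) ln (pi' t (at_ tau.1 t) (at_ tau.2 t)))%R.
    by rewrite /traj_cost big_split /=; ring.
  rewrite TD EX /opt_density /opt_unnorm -EFinM.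
  have := @key_real R _ _ (traj_cost T c cT tau) _ eta _ P0 Q0 Zr0 Ld.
  by case: ifPn => _ <-.
split; case=> adm H; split => // b Pb; move: (H b Pb); rewrite !key // leeD2lE //.
Qed.
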